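(* Let $\mathcal{H}$ be a $d$-dimensional Hilbert space, let $\mathcal{A}$ be an observable on $\mathcal{H}$ with orthonormal eigenbasis $\{|k\rangle\}_{k=0}^{d-1}$, and let $\rho_t$ be a family of density operators on $\mathcal{H}$ evolving under an arbitrary dynamics (in the Schrödinger picture) such that $\sqrt{\rho_t}$ is differentiable in $t$. Then for every $T>0$, the time needed to go from coherence $C(\rho_0,\mathcal{A})$ to $C(\rho_T,\mathcal{A})$ satisfies $$T\ \geq\ T_C=\frac{\sqrt{2}\,\bigl|\sqrt{C(\rho_0,\mathcal{A})}-\sqrt{C(\rho_T,\mathcal{A})}\bigr|}{\Bigl\langle\!\Bigl\langle \sqrt{\sum_{k=0}^{d-1}\lVert[\partial_t\sqrt{\rho_t},|k\rangle\langle k|]\rVert_{\rm HS}^2}\Bigr\rangle\!\Bigr\rangle_T}$$ (whenever the time average in the denominator is nonzero).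
   Context: The skew-information-based coherence of a state $\rho$ in the eigenbasis $\{|k\rangle\}$ of $\mathcal{A}$ is $C(\rho,\mathcal{A})=\sum_{k=0}^{d-1}I(\rho,|k\rangle\langle k|)=\frac12\sum_{k}\lVert[\sqrt{\rho},|k\rangle\langle k|]\rVert_{\rm HS}^2$, where $I(\rho,X)=\frac12\lVert[\sqrt\rho,X]\rVert_{\rm HS}^2$ is the skew information, $[X,Y]=XY-YX$, and $\lVert O\rVert_{\rm HS}=\sqrt{\operatorname{tr}(O^\dagger O)}$. For a function $X_t$, $\langle\!\langle X_t\rangle\!\rangle_T=\frac{1}{T}\int_0^T X_t\,dt$. *)

(* Defs.v *)
From HB Require Import structures.
From mathcomp Require Import all_boot all_order all_algebra.
From mathcomp Require Import all_classical all_reals all_analysis.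
From mathcomp Require Import complex.
Set Implicit Arguments. Unset Strict Implicit. Unset Printing Implicit Defensive.
Import Order.TTheory GRing.Theory Num.Theory.
Import numFieldNormedType.Exports.
Local Open Scope ring_scope.
Local Open Scope complex_scope.

Section QDefs.
Variable R : realType.
Local Notation C := R[i].

Definition dagger (m n : nat) (A : 'M[C]_(m, n)) : 'M[C]_(n, m) :=
  \matrix_(i, j) conjc (A j i).

Definition commut (d : nat) (X Y : 'M[C]_d) : 'M[C]_d := X *m Y - Y *m X.

(* squared Hilbert-Schmidt norm ||O||_HS^2 = tr(O^dagger O) = sum |O_ij|^2, as a real *)
Definition hs2 (d : nat) (O : 'M[C]_d) : R :=
  \sum_(i < d) \sum_(j < d) (complex.Re (O i j) ^+ 2 + complex.Im (O i j) ^+ 2).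

Definition q_hermitian (d : nat) (A : 'M[C]_d) : Prop := dagger A = A.

(* positive semidefinite: <v|A|v> is real and >= 0 for every vector v *)
Definition q_psd (d : nat) (A : 'M[C]_d) : Prop :=
  forall v : 'cV[C]_d, 0 <= (dagger v *m A *m v) 0 0.

Definition q_density (d : nat) (rho : 'M[C]_d) : Prop :=
  q_hermitian rho /\ q_psd rho /\ \tr rho = 1.

Definition q_sqrt (d : nat) (S rho : 'M[C]_d) : Prop :=
  q_hermitian S /\ q_psd S /\ S *m S = rho.

Definition q_unitary (d : nat) (U : 'M[C]_d) : Prop := dagger U *m U = 1%:M.

Definition kbproj (d : nat) (U : 'M[C]_d) (k : 'I_d) : 'M[C]_d :=
  col k U *m dagger (col k U).

Definition skew_info (d : nat) (sqrtrho X : 'M[C]_d) : R :=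
  2^-1 * hs2 (commut sqrtrho X).

(* C(rho, A) = sum_k I(rho, |k><k|), where sqrtrho = sqrt rho and the
   eigenbasis {|k>} of A is given by the columns of U *)
Definition coherence (d : nat) (sqrtrho U : 'M[C]_d) : R :=
  \sum_(k < d) skew_info sqrtrho (kbproj U k).

Definition mderiv (d : nat) (S : R -> 'M[C]_d) (t : R) : 'M[C]_d :=
  \matrix_(i, j) (derive1 (fun s => complex.Re (S s i j)) t
                   +i* derive1 (fun s => complex.Im (S s i j)) t).

Definition mderivable (d : nat) (S : R -> 'M[C]_d) (t : R) : Prop :=
  forall i j, derivable (fun s => complex.Re (S s i j)) t 1 /\
              derivable (fun s => complex.Im (S s i j)) t 1.

Definition time_avg (X : R -> R) (T : R) : R :=
  T^-1 * Rintegral lebesgue_measure `[0, T]%classic X.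

End QDefs.

(* Main.v *)
Require Import Defs.
From HB Require Import structures.
From mathcomp Require Import all_boot all_order all_algebra.
From mathcomp Require Import all_classical all_reals all_analysis.
From mathcomp Require Import complex.
Import Order.TTheory GRing.Theory Num.Theory.
Import numFieldNormedType.Exports.
Local Open Scope ring_scope.
Local Open Scope complex_scope.

From mathcomp Require Import measurable_realfun.
From mathcomp Require Import ring lra.

Section Core.
Local Set Implicit Arguments.
Local Unset Strict Implicit.
Context {R : realType}.
Local Open Scope classical_set_scope.
Local Notation mu := (@lebesgue_measure R).

Lemma series_le (u : nat -> \bar R) (x : \bar R) :
  (forall n, (0 <= u n)%E) -> (forall N, (\sum_(0 <= k < N) u k <= x)%E) ->
  (\sum_(0 <= k <oo) u k <= x)%E.
Proof.
move=> u0 H; apply: lime_le; first exact: is_cvg_nneseries.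
exact: nearW.
Qed.

Lemma sum_ind_le (d y : R) (N : nat) : 0 < d -> 0 <= y ->
  (\sum_(0 <= k < N) d * ((k.+1%:R * d <= y)%R)%:R <= y)%R.
Proof.
move=> d0 y0.
suff : \sum_(0 <= k < N) d * ((k.+1%:R * d <= y)%R)%:R <= N%:R * d /\
       \sum_(0 <= k < N) d * ((k.+1%:R * d <= y)%R)%:R <= y by case.
elim: N => [|N [IH1 IH2]]; first by rewrite big_nil mul0r; split.
rewrite big_nat_recr //=.
have [H|H] := boolP (N.+1%:R * d <= y).
  rewrite mulr1; split; last by apply: le_trans H; rewrite -natr1 mulrDl mul1r lerD2r.
  by rewrite -natr1 mulrDl mul1r lerD2r.
rewrite mulr0 addr0; split => //.
apply: (le_trans IH1); apply: ler_wpM2r; first exact: ltW. by rewrite ler_nat.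
Qed.


Lemma core_eps (a b : R) (phi phi' f : R -> R) (d e eta : R) :
  a < b ->
  (forall t, a <= t <= b -> {for t, continuous phi}) ->
  (forall t, a <= t < b ->
     (fun h => h^-1 * (phi (h + t) - phi t)) @ 0^' --> phi' t) ->
  (forall t, a <= t <= b -> 0 <= f t) ->
  (forall t, a <= t < b -> phi' t <= f t) ->
  mu.-integrable `[a, b] (fun x => (f x)%:E) ->
  0 < d -> 0 < e -> 0 < eta ->
  ((phi b - phi a)%:E <= (d * (b - a) + e + eta * (b - a))%:E
                         + \int[mu]_(x in `[a, b]) (f x)%:E)%E.
Proof.
move=> ab cphi dphi f0 fle intf d0 e0 eta0.
have mf : measurable_fun `[a, b] f.
  by apply/measurable_EFinP; exact: (measurable_int mu intf).
pose A k := `[a, b] `&` [set x | k.+1%:R * d <= f x].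
have mA k : measurable (A k).
  have -> : A k = `[a, b] `&` f @^-1` `[k.+1%:R * d, +oo[.
    by apply/seteqP; split => x /= [xab H]; split => //; rewrite ?in_itv /= ?andbT in H *.
  by apply: mf => //; exact: measurable_itv.
have mab : measurable `[a, b] by exact: measurable_itv.
have muab : (mu `[a, b] = (b - a)%:E)%E.
  by rewrite lebesgue_measure_itv /= lte_fin ab -EFinD.
have muA k : (mu (A k) < +oo)%E.
  have H : (mu (A k) <= mu `[a, b])%E.
    by apply: le_measure; rewrite ?inE //; [exact: mA | exact: subIsetl].
  by apply: (le_lt_trans H); rewrite muab ltry.
have epsk k : 0 < (e / d) / (2 ^ k.+1)%:R by rewrite !divr_gt0 // ltr0n expn_gt0.
have /choice [U HU] : forall k, exists U : set R,
    [/\ open U, A k `<=` U & (mu (U `\` A k) < ((e / d) / (2 ^ k.+1)%:R)%:E)%E].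
  by move=> k; exact: lebesgue_regularity_outer (mA k) (muA k) (epsk k).
have mU k : measurable (U k) by apply: open_measurable; case: (HU k).
pose G t := ((d * (t - a))%:E + \sum_(0 <= k <oo) (d%:E * mu (U k `&` `[a, t])))%E.
pose P t := ((phi t - phi a)%:E <= G t + (eta * (t - a))%:E)%E.
have G0 t : a <= t -> (0 <= G t)%E.
  move=> at_; apply: adde_ge0; first by rewrite lee_fin; apply: mulr_ge0; [exact: ltW | rewrite subr_ge0].
  by apply: nneseries_ge0 => k _ _; apply: mule_ge0 => //; rewrite lee_fin ltW.

have Gmono u s : a <= u <= s -> (G u <= G s)%E.
  move=> /andP[au us]; apply: leeD.
    by rewrite lee_fin; apply: ler_wpM2l; [exact: ltW | rewrite lerD2r].
  apply: lee_nneseries.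
    by move=> k _ _; apply: mule_ge0 => //; rewrite lee_fin ltW.
  move=> k _; apply: lee_wpmul2l; first by rewrite lee_fin ltW.
  apply: le_measure; rewrite ?inE; [exact: measurableI (mU k) (measurable_itv _) | exact: measurableI (mU k) (measurable_itv _) | ].
  move=> x [Ux]; rewrite /= !in_itv /= => /andP[ax xu]; split => //.
  by rewrite ax (le_trans xu us).
have Gb : (G b <= (d * (b - a) + e)%:E + \int[mu]_(x in `[a, b]) (f x)%:E)%E.
  have H1 : (\sum_(0 <= k <oo) (d%:E * mu (U k `&` `[a, b])) <=
     \sum_(0 <= k <oo) (d%:E * mu (A k) + (e / (2 ^ k.+1)%:R)%:E))%E.
    apply: lee_nneseries.
      by move=> k _ _; apply: mule_ge0 => //; rewrite lee_fin ltW.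
    move=> k _; case: (HU k) => _ AU muUA.
    apply: (@le_trans _ _ (d%:E * mu (U k))%E).
      apply: lee_wpmul2l; first by rewrite lee_fin ltW.
      apply: le_measure; rewrite ?inE; [exact: measurableI (mU k) (measurable_itv _) | exact: mU | ].
      exact: subIsetl.
    rewrite (measureDI mu (mU k) (mA k)) (setIidr AU) ge0_muleDr //.
    rewrite addeC; apply: leeD2l.
    apply: (@le_trans _ _ (d%:E * ((e / d) / (2 ^ k.+1)%:R)%:E)%E).
      by apply: lee_wpmul2l; [rewrite lee_fin ltW | exact: ltW].
    rewrite -EFinM lee_fin le_eqVlt; apply/orP; left; apply/eqP.
    field; apply/andP; split; apply: lt0r_neq0; [by rewrite ltr0n expn_gt0 | exact: d0].
  have H2 := @epsilon_trick R (fun k => d%:E * mu (A k))%E e xpredT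
    (fun k => mule_ge0 (ltW d0 : (0 <= d%:E)%E) (measure_ge0 _ _)) (ltW e0).
  have H3 : (\sum_(0 <= k <oo) (d%:E * mu (A k)) <= \int[mu]_(x in `[a, b]) (f x)%:E)%E.
    apply: series_le.
      by move=> k; apply: mule_ge0; [rewrite lee_fin ltW | exact: measure_ge0].
    move=> N.
    pose g k x := (d%:E * (\1_(A k) x)%:E)%E.
    have mi k : measurable_fun `[a, b] (EFin \o (\1_(A k) : R -> R)).
      by apply/measurable_EFinP; exact: (measurable_indic (mA k)).
    have mg k : measurable_fun `[a, b] (g k).
      rewrite (_ : g k = EFin \o (fun x => d * \1_(A k) x)); last first.
        by apply/funext => x; rewrite /g /= EFinM.
      apply/measurable_EFinP.
      exact: (measurable_funM (measurable_cst d) (measurable_indic (mA k))).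
    have g0 k x : `[a, b] x -> (0 <= g k x)%E.
      by move=> _; apply: mule_ge0; rewrite lee_fin; [exact: ltW | rewrite indicE ler0n].
    have -> : (\sum_(0 <= k < N) (d%:E * mu (A k)) =
               \sum_(0 <= k < N) \int[mu]_(x in `[a, b]) g k x)%E.
      apply: eq_bigr => k _; rewrite /g ge0_integralZl_EFin //.
      - rewrite integral_indic //; last exact: mA.
        by rewrite setIidl //; exact: subIsetl.
      all: try exact: ltW.
      all: try exact: mi.
      all: try by move=> x _; rewrite lee_fin indicE ler0n.
    rewrite -ge0_integral_sum //.
    apply: ge0_le_integral => //.
    - by move=> x xab; apply: sume_ge0 => k _; exact: g0.
    - exact: emeasurable_sum.
    - exact: (measurable_int mu intf).
    move=> x xab.
    have xab' : a <= x <= b by move: xab; rewrite /= in_itv.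
    rewrite /g; under eq_bigr do rewrite -EFinM.
    rewrite sumEFin lee_fin.
    have HH k : \1_(A k) x = ((k.+1%:R * d <= f x)%R)%:R :> R.
      rewrite indicE; case: (boolP (k.+1%:R * d <= f x)) => H.
        by rewrite mem_set.
      by rewrite memNset //; case => _ /=; apply/negP.
    under eq_bigr => k _ do rewrite HH.
    exact: sum_ind_le (f0 x xab').
  rewrite /G; apply: (le_trans (leeD2l _ H1)); apply: (le_trans (leeD2l _ H2)).
  by rewrite addeA addeAC -EFinD; apply: leeD2l.
have Pa : P a.
  by rewrite /P !subrr mulr0 adde0; exact: G0.
have Plocal s : a <= s < b -> P s -> exists2 r, 0 < r & forall t, s < t < s + r -> P t.
  move=> /andP[as_ sb] Ps.
  have sab : a <= s <= b by rewrite as_ ltW.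
  have fs0 : 0 <= f s / d by rewrite divr_ge0 ?(f0 s sab) ?ltW.
  pose m := Num.truncn (f s / d).
  have /andP[mlo mhi] := truncn_itv fs0.
  have fsm : f s < m.+1%:R * d by rewrite -ltr_pdivrMr.
  have mfs : m%:R * d <= f s by rewrite -ler_pdivlMr.
  have sA k : (k < m)%N -> A k s.
    move=> km; split; first by rewrite /= in_itv /=.
    apply: le_trans mfs; apply: ler_wpM2r; first exact: ltW.
    by rewrite ler_nat.
  have nU : \forall t \near s, forall k : 'I_m, U k t.
    apply: (@filter_forall _ _ (fun k : 'I_m => U k) (nbhs s)) => k; have [oU AU _] := HU k.
    by apply: open_nbhs_nbhs; split => //; apply: AU; apply: sA; exact: ltn_ord.
  move/nbhs_ballP: nU => [r1 r10 Hr1].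
  have := dphi s ltac:(by rewrite as_ sb).
  move/cvgrPdist_lt => /(_ eta eta0); rewrite near_withinE.
  move/nbhs_ballP => [r2 r20 Hr2].
  exists (Num.min r1 r2); first by rewrite lt_min r10 r20.
  move=> t /andP[st tsr].
  pose h := t - s.
  have h0 : 0 < h by rewrite /h subr_gt0.
  have mr1 : Num.min r1 r2 <= r1 by rewrite ge_min lexx.
  have mr2 : Num.min r1 r2 <= r2 by rewrite ge_min lexx orbT.
  have hr1 : h < r1 by rewrite /h; lra.
  have hr2 : h < r2 by rewrite /h; lra.
  have dq : phi t - phi s <= h * (m.+1%:R * d + eta).
    have := Hr2 h; rewrite /ball /= sub0r normrN (ger0_norm (ltW h0)) => /(_ hr2).
    move=> /(_ (lt0r_neq0 h0)); rewrite (_ : h + s = t); last by rewrite /h subrK.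
    rewrite ltr_norml => /andP[H1 _].
    have H3 : h^-1 * (phi t - phi s) < m.+1%:R * d + eta.
      have := fle s ltac:(by rewrite as_ sb); lra.
    rewrite -ler_pdivrMl //; exact: ltW.
  have mUa k x : measurable (U k `&` `[a, x]) by exact: measurableI (mU k) (measurable_itv _).
  have term k : (d%:E * mu (U k `&` `[a, s]) + (if (k < m)%N then (d * h)%:E else 0)
                 <= d%:E * mu (U k `&` `[a, t]))%E.
    case: ifP => km; last first.
      rewrite adde0; apply: lee_wpmul2l; first by rewrite lee_fin ltW.
      apply: le_measure; rewrite ?inE; [exact: mUa | exact: mUa | ].
      move=> x [Ux]; rewrite /= !in_itv /= => /andP[ax xs]; split => //.
      by rewrite ax /=; apply: (le_trans xs); exact: ltW.
    have sub : U k `&` `[a, s] `|` `]s, t] `<=` U k `&` `[a, t].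
      move=> x [[Ux]|]; rewrite /= !in_itv /=.
        by move=> /andP[ax xs]; split => //; rewrite ax /= (le_trans xs) // ltW.
      move=> /andP[sx xt]; split; last by rewrite xt andbT; apply: (le_trans as_); exact: ltW.
      have := Hr1 x; rewrite /ball /= => H.
      have : `|s - x| < r1 by rewrite ltr0_norm ?subr_lt0 //; rewrite /h in hr1; lra.
      by move/H => /(_ (Ordinal km)).
    have disj : U k `&` `[a, s] `&` `]s, t] = set0.
      apply/seteqP; split => x // [[_]]; rewrite /= !in_itv /= => /andP[_ xs] /andP[sx _].
      by move: (lt_le_trans sx xs); rewrite ltxx.
    have Hle : (mu (U k `&` `[a, s] `|` `]s, t]) <= mu (U k `&` `[a, t]))%E.
      apply: le_measure; rewrite ?inE; last exact: sub.
        by apply: measurableU; [exact: mUa | exact: measurable_itv].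
      exact: mUa.
    have mst : (mu `]s, t] = h%:E)%E by rewrite lebesgue_measure_itv /= lte_fin st -EFinB.
    have {}Hle : (mu (U k `&` `[a, s]) + h%:E <= mu (U k `&` `[a, t]))%E.
      apply: le_trans Hle; rewrite le_eqVlt; apply/orP; left; apply/eqP; rewrite -mst; symmetry.
      exact: (measureU mu (mUa k s) (measurable_itv _) disj).
    have d0E : (0 <= d%:E)%E by rewrite lee_fin ltW.
    apply: le_trans (lee_wpmul2l d0E Hle).
    by rewrite ge0_muleDr // ?EFinM // lee_fin ltW.
  pose X := (\sum_(0 <= k <oo) (d%:E * mu (U k `&` `[a, s])))%E.
  have yge0 k : (0 <= (if (k < m)%N then (d * h)%:E else 0))%E.
    by case: ifP => // _; rewrite lee_fin mulr_ge0 // ltW.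
  have xge0 k : (0 <= d%:E * mu (U k `&` `[a, s]))%E.
    by apply: mule_ge0 => //; rewrite lee_fin ltW.
  have Gt : ((d * (t - a))%:E + X + (m%:R * (d * h))%:E <= G t)%E.
    rewrite /G -addeA; apply: leeD2l.
    have := @lee_nneseries R (fun k => d%:E * mu (U k `&` `[a, s]) +
       (if (k < m)%N then (d * h)%:E else 0))%E
      (fun k => d%:E * mu (U k `&` `[a, t]))%E xpredT 0
      (fun k _ _ => adde_ge0 (xge0 k) (yge0 k)) (fun k _ => term k).
    rewrite nneseriesD //; apply: le_trans; apply: leeD2l.
    have := @nneseries_lim_ge R (fun k => if (k < m)%N then (d * h)%:E else 0)%E xpredT 0 m
      (fun k _ _ => yge0 k).
    apply: le_trans; rewrite le_eqVlt; apply/orP; left; apply/eqP.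
    rewrite big_mkord; under eq_bigr => i _ do rewrite ltn_ord.
    by rewrite sumEFin sumr_const card_ord mulr_natl.
  have shuf1 (Y : \bar R) (u v w : R) :
      ((u%:E + (v%:E + Y + w%:E)) = (u + v + w)%:E + Y)%E.
    by rewrite !EFinD (addeAC v%:E Y) !addeA.
  have shuf2 (Y : \bar R) (v w z : R) :
      ((v%:E + Y + w%:E + z%:E) = (v + w + z)%:E + Y)%E.
    by rewrite !EFinD (addeAC v%:E Y) (addeAC _ Y).
  rewrite /P; apply: le_trans (leeD2r _ Gt); rewrite shuf2.
  move: Ps; rewrite /P -/X => Ps.
  have : ((phi t - phi a)%:E <= (phi t - phi s)%:E + ((d * (s - a))%:E + X + (eta * (s - a))%:E))%E.
    rewrite (_ : phi t - phi a = (phi t - phi s) + (phi s - phi a)); last by ring.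
    by rewrite EFinD; apply: leeD2l.
  move/le_trans; apply; rewrite shuf1; apply: leeD2r; rewrite lee_fin.
  have E : h * (m.+1%:R * d + eta) + d * (s - a) + eta * (s - a) =
           d * (t - a) + m%:R * (d * h) + eta * (t - a).
    by rewrite /h -natr1; ring.
  by rewrite -E; rewrite lerD2r lerD2r.
have Pclose s : a < s <= b -> (forall u, a <= u < s -> P u) -> P s.
  move=> /andP[as_ sb] HP.
  rewrite /P; apply/negPn/negP; rewrite -ltNge => contra.
  have Gs0 := G0 s (ltW as_).
  have Gfin : G s \is a fin_num.
    rewrite ge0_fin_numE //; apply: (le_lt_trans _ (ltry (phi s - phi a))).
    apply: le_trans (ltW contra); apply: leeDl.
    by rewrite lee_fin; apply: mulr_ge0; [exact: ltW | rewrite subr_ge0 ltW].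
  move: contra; rewrite -(fineK Gfin) -EFinD lte_fin => contra.
  set g := fine (G s) in contra *.
  pose e1 := (phi s - phi a - g - eta * (s - a)) / 2.
  have e10 : 0 < e1 by rewrite /e1; lra.
  have := cphi s ltac:(by rewrite (ltW as_) sb).
  move/cvgrPdist_lt => /(_ e1 e10) /nbhs_ballP [r r0 Hr].
  pose u := s - Num.min r (s - a) / 2.
  have m1 : Num.min r (s - a) <= r by rewrite ge_min lexx.
  have m2 : Num.min r (s - a) <= s - a by rewrite ge_min lexx orbT.
  have m0 : 0 < Num.min r (s - a) by rewrite lt_min r0 subr_gt0 as_.
  have au : a <= u by rewrite /u; lra.
  have us : u < s by rewrite /u; lra.
  have Hu : `|phi s - phi u| < e1.
    apply: Hr; rewrite /ball /= /u.
    rewrite (_ : s - (s - Num.min r (s - a) / 2) = Num.min r (s - a) / 2); last by ring.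
    by rewrite ger0_norm; lra.
  have Pu := HP u ltac:(by rewrite au us).
  have Gus : (G u <= G s)%E by apply: Gmono; rewrite au ltW.
  have : ((phi u - phi a)%:E <= (g + eta * (u - a))%:E)%E.
    apply: (le_trans Pu); rewrite EFinD /g fineK //; exact: leeD2r.
  rewrite lee_fin => H.
  have : eta * (u - a) <= eta * (s - a) by apply: ler_wpM2l; [exact: ltW | lra].
  move: Hu; rewrite ltr_norml => /andP[_ Hu2].
  rewrite /e1 in e10 Hu2; lra.
have Pb : P b.
pose S := [set t | a <= t <= b /\ forall u, a <= u <= t -> P u].
have Sa : S a.
  split; first by rewrite lexx ltW.
  move=> u /andP[au ua]; have -> : u = a by apply/le_anti; rewrite ua au.
  exact: Pa.
have S0 : S !=set0 by exists a.
have Sub : ubound S b by move=> t [/andP[_ tb] _].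
have hS : has_ubound S by exists b.
have aS : a <= sup S := ub_le_sup hS Sa.
have Sb : sup S <= b := ge_sup S0 Sub.
have C1 u : a <= u < sup S -> P u.
  move=> /andP[au us]; have [y [_ Hy] uy] := sup_gt S0 us.
  by apply: Hy; rewrite au ltW.
have Ps : P (sup S).
  have [as_|sa] := ltP a (sup S); last first.
    by have -> : sup S = a by apply/le_anti; rewrite sa aS.
  by apply: Pclose; [rewrite as_ Sb | exact: C1].
have [sb|bs] := ltP (sup S) b; last first.
  have sbe : sup S = b by apply/le_anti; rewrite Sb bs.
  by rewrite -sbe.
have [r r0 Hr] := Plocal (sup S) ltac:(by rewrite aS sb) Ps.
pose r' := Num.min r (b - sup S).
have r'r : r' <= r by rewrite /r' ge_min lexx.
have r'b : r' <= b - sup S by rewrite /r' ge_min lexx orbT.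
have r'0 : 0 < r' by rewrite /r' lt_min r0 subr_gt0 sb.
pose t := sup S + r' / 2.
have St : S t.
  split; first by apply/andP; split; rewrite /t; lra.
  move=> u /andP[au ut].
  have [us|su] := ltP u (sup S); first by apply: C1; rewrite au us.
  have [sue|su'] := eqVneq (sup S) u; first by rewrite -sue.
  apply: Hr; apply/andP; split; first by rewrite lt_neqAle su' su.
  by rewrite /t in ut; lra.
have := ub_le_sup hS St; rewrite /t; lra.
apply: (le_trans Pb); apply: (le_trans (leeD2r _ Gb)).
by rewrite EFinD addeAC.
Qed.

End Core.

Section App.
Local Set Implicit Arguments.
Local Unset Strict Implicit.
Context {R : realType}.

Definition nrm (I : finType) (x : I -> R) := Num.sqrt (\sum_i x i ^+ 2).

Lemma sumsq_ge0 (I : finType) (x : I -> R) : 0 <= \sum_i x i ^+ 2.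
Proof. by apply: sumr_ge0 => i _; exact: sqr_ge0. Qed.

Lemma cs2 (I : finType) (x y : I -> R) :
  (\sum_i x i * y i) ^+ 2 <= (\sum_i x i ^+ 2) * (\sum_i y i ^+ 2).
Proof.
pose A := \sum_i x i ^+ 2; pose B := \sum_i y i ^+ 2; pose C := \sum_i x i * y i.
rewrite -/A -/B -/C.
have A0 : 0 <= A by exact: sumsq_ge0.
have B0 : 0 <= B by exact: sumsq_ge0.
have [Az|Ap] := eqVneq A 0.
  have x0 i : x i = 0.
    have H := @psumr_eq0P R I xpredT (fun i => x i ^+ 2) (fun j _ => sqr_ge0 (x j)) Az i isT.
    by apply/eqP; rewrite -sqrf_eq0; apply/eqP.
  have -> : C = 0 by rewrite /C big1 // => i _; rewrite x0 mul0r.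
  by rewrite expr0n /= mulr_ge0.
have Apos : 0 < A by rewrite lt_neqAle eq_sym Ap A0.
have E : \sum_i (x i * C - y i * A) ^+ 2 = A * (A * B - C ^+ 2).
  transitivity (\sum_i (C ^+ 2 * x i ^+ 2 - (2 * C * A) * (x i * y i) + A ^+ 2 * y i ^+ 2)).
    by apply: eq_bigr => i _; ring.
  rewrite big_split /= sumrB -!mulr_sumr -/A -/B -/C; ring.
have : 0 <= A * (A * B - C ^+ 2) by rewrite -E; exact: sumsq_ge0.
rewrite pmulr_rge0 // subr_ge0; lra.
Qed.

Lemma cs (I : finType) (x y : I -> R) :
  \sum_i x i * y i <= nrm x * nrm y.
Proof.
rewrite /nrm -sqrtrM ?sumsq_ge0 //.
apply: (le_trans (ler_norm _)).
rewrite -sqrtr_sqr; apply: ler_wsqrtr.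
exact: cs2.
Qed.

Lemma nrm_ge0 (I : finType) (x : I -> R) : 0 <= nrm x.
Proof. exact: sqrtr_ge0. Qed.

Lemma nrm_sqr (I : finType) (x : I -> R) : nrm x ^+ 2 = \sum_i x i ^+ 2.
Proof. by rewrite /nrm sqr_sqrtr // sumsq_ge0. Qed.

Lemma minkowski (I : finType) (x y : I -> R) :
  nrm (fun i => x i + y i) <= nrm x + nrm y.
Proof.
rewrite -(ler_pXn2r (_ : (0 < 2)%N)) ?nnegrE ?addr_ge0 ?nrm_ge0 //.
rewrite nrm_sqr.
have -> : \sum_i (x i + y i) ^+ 2 = \sum_i x i ^+ 2 + 2 * \sum_i x i * y i + \sum_i y i ^+ 2.
  rewrite mulr_sumr -!big_split /=; apply: eq_bigr => i _; ring.
rewrite sqrrD -!nrm_sqr -mulr_natl lerD2r lerD2l.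
rewrite mulr1 -[X in _ <= X]mulr_natl ler_pM2l //; exact: cs.
Qed.

Lemma nrm_diff (I : finType) (x y : I -> R) :
  `|nrm x - nrm y| <= nrm (fun i => x i - y i).
Proof.
have h1 : nrm x <= nrm (fun i => x i - y i) + nrm y.
  have := minkowski (fun i => x i - y i) y.
  by rewrite (_ : (fun i => x i - y i + y i) = x) //; apply/funext => i; rewrite subrK.
have h2 : nrm y <= nrm (fun i => x i - y i) + nrm x.
  have := minkowski (fun i => y i - x i) x.
  rewrite (_ : (fun i => y i - x i + x i) = y); last by apply/funext => i; rewrite subrK.
  suff -> : nrm (fun i => y i - x i) = nrm (fun i => x i - y i) by [].
  by rewrite /nrm; congr (Num.sqrt _); apply: eq_bigr => i _; ring.
rewrite ler_norml; apply/andP; split; lra.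
Qed.


Local Open Scope complex_scope.

Lemma ReD (z w : R[i]) : complex.Re (z + w) = complex.Re z + complex.Re w.
Proof. by case: z; case: w. Qed.
Lemma ImD (z w : R[i]) : complex.Im (z + w) = complex.Im z + complex.Im w.
Proof. by case: z; case: w. Qed.
Lemma ReZ (r : R) (z : R[i]) : complex.Re (r%:C * z) = r * complex.Re z.
Proof. by case: z => a b /=; ring. Qed.
Lemma ImZ (r : R) (z : R[i]) : complex.Im (r%:C * z) = r * complex.Im z.
Proof. by case: z => a b /=; ring. Qed.

Definition flat (d : nat) (W : 'I_d -> 'M[R[i]]_d) (x : 'I_d * 'I_d * 'I_d * bool) : R :=
  if x.2 then complex.Re (W x.1.1.1 x.1.1.2 x.1.2) else complex.Im (W x.1.1.1 x.1.1.2 x.1.2).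

Lemma flat_sum (d : nat) (W : 'I_d -> 'M[R[i]]_d) :
  \sum_(k < d) \sum_(i < d) \sum_(j < d)
     (complex.Re (W k i j) ^+ 2 + complex.Im (W k i j) ^+ 2) = \sum_x flat W x ^+ 2.
Proof.
transitivity (\sum_(k < d) \sum_(i < d) \sum_(j < d) \sum_(b : bool)
   (if b then complex.Re (W k i j) else complex.Im (W k i j)) ^+ 2).
  by apply: eq_bigr => k _; apply: eq_bigr => i _; apply: eq_bigr => j _; rewrite big_bool.
rewrite pair_big /= pair_big /= pair_big /=.
by apply: eq_bigr => [[[[k i] j] b]] _.
Qed.


Lemma real_lin_decomp (d : nat) (L : 'M[R[i]]_d -> R) :
  (forall A B, L (A + B) = L A + L B) ->
  (forall (r : R) A, L (r%:C *: A) = r * L A) ->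
  forall A, L A = \sum_(i < d) \sum_(j < d)
    (L (delta_mx i j) * complex.Re (A i j) + L ('i *: delta_mx i j) * complex.Im (A i j)).
Proof.
move=> LD LZ A.
have L0 : L 0 = 0.
  have := LZ 0 0; rewrite mul0r => <-; congr L; by rewrite scaler0.
have Lsum (I : Type) (r : seq I) (P : pred I) (F : I -> 'M[R[i]]_d) :
    L (\sum_(i <- r | P i) F i) = \sum_(i <- r | P i) L (F i).
  exact: (big_morph L LD L0).
rewrite {1}(matrix_sum_delta A) Lsum; apply: eq_bigr => i _; rewrite Lsum.
apply: eq_bigr => j _.
have Ez : A i j = (complex.Re (A i j))%:C + (complex.Re (A i j) *0 + complex.Im (A i j))%:C * 'i.
  by case: (A i j) => a b /=; apply/eqP; rewrite eq_complex /=; apply/andP; split; apply/eqP; ring.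
rewrite {1}Ez scalerDl LD -scalerA LZ LZ; ring.
Qed.

Lemma lin_deriv (d : nat) (L : 'M[R[i]]_d -> R) (S : R -> 'M[R[i]]_d) (t : R) :
  (forall A B, L (A + B) = L A + L B) ->
  (forall (r : R) A, L (r%:C *: A) = r * L A) ->
  mderivable S t ->
  is_derive t (1 : R) (fun s => L (S s)) (L (mderiv S t)).
Proof.
move=> LD LZ dS.
have E := real_lin_decomp LD LZ.
pose f1 i j := fun s => complex.Re (S s i j).
pose f2 i j := fun s => complex.Im (S s i j).
have H1 i j : is_derive t (1 : R) (f1 i j) (derive1 (f1 i j) t).
  by rewrite derive1E; apply: derivableP; case: (dS i j).
have H2 i j : is_derive t (1 : R) (f2 i j) (derive1 (f2 i j) t).
  by rewrite derive1E; apply: derivableP; case: (dS i j).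
have big := @is_derive_sum _ _ _ d (fun i => \sum_(j < d)
   (L (delta_mx i j) \*: f1 i j + L ('i *: delta_mx i j) \*: f2 i j)) t 1 _
   (fun i => @is_derive_sum _ _ _ d _ t 1 _ (fun j => is_deriveD (is_deriveZ (L (delta_mx i j)) (H1 i j))
      (is_deriveZ (L ('i *: delta_mx i j)) (H2 i j)))).
move: big; congr is_derive.
  apply/funext => s; rewrite E !fct_sumE; apply: eq_bigr => i _; rewrite fct_sumE.
  by apply: eq_bigr => j _.
rewrite E; apply: eq_bigr => i _; apply: eq_bigr => j _.
by rewrite /mderiv !mxE.
Qed.

End App.


Section Extra.
Local Set Implicit Arguments.
Local Unset Strict Implicit.
Context {R : realType}.
Local Open Scope classical_set_scope.
Local Notation mu := (@lebesgue_measure R).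

Lemma deriv_cvg (phi : R -> R) t l : is_derive t (1:R) phi l ->
  (fun h => h^-1 * (phi (h + t) - phi t)) @ 0^' --> l.
Proof.
case=> ex val; rewrite -val.
have -> : (fun h => h^-1 * (phi (h + t) - phi t)) =
          (fun h => h^-1 *: ((phi \o shift t) h%:A - phi t)).
  by apply/funext => h /=; rewrite /GRing.scale /= mulr1.
exact: ex.
Qed.

Lemma core (a b : R) (phi phi' f : R -> R) :
  a < b ->
  (forall t, a <= t <= b -> {for t, continuous phi}) ->
  (forall t, a <= t < b -> is_derive t (1:R) phi (phi' t)) ->
  (forall t, a <= t <= b -> 0 <= f t) ->
  (forall t, a <= t < b -> phi' t <= f t) ->
  mu.-integrable `[a, b] (fun x => (f x)%:E) ->
  ((phi b - phi a)%:E <= \int[mu]_(x in `[a, b]) (f x)%:E)%E.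
Proof.
move=> ab cphi dphi f0 fle intf.
apply/lee_addgt0Pr => e e0.
pose dd := e / (3 * (b - a)).
have ba0 : 0 < b - a by rewrite subr_gt0.
have dd0 : 0 < dd by rewrite /dd divr_gt0 // mulr_gt0.
have e30 : 0 < e / 3 by rewrite divr_gt0.
have := @core_eps R a b phi phi' f dd (e / 3) dd ab cphi
  (fun t ht => deriv_cvg (dphi t ht)) f0 fle intf dd0 e30 dd0.
have -> : dd * (b - a) + e / 3 + dd * (b - a) = e.
  by rewrite /dd; field; rewrite lt0r_neq0.
by rewrite addeC.
Qed.

Lemma coreR (a b : R) (phi phi' f : R -> R) :
  a < b ->
  (forall t, a <= t <= b -> {for t, continuous phi}) ->
  (forall t, a <= t < b -> is_derive t (1:R) phi (phi' t)) ->
  (forall t, a <= t <= b -> 0 <= f t) ->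
  (forall t, a <= t < b -> phi' t <= f t) ->
  mu.-integrable `[a, b] (fun x => (f x)%:E) ->
  phi b - phi a <= Rintegral mu `[a, b] f.
Proof.
move=> ab cphi dphi f0 fle intf.
have H := core ab cphi dphi f0 fle intf.
have fin : (\int[mu]_(x in `[a, b]) (f x)%:E \is a fin_num)%E.
  apply: (@integrable_fin_num _ _ _ mu _ _ _ intf).
  exact: measurable_itv.
by rewrite /Rintegral -lee_fin fineK.
Qed.

End Extra.

Theorem theorem2 (R : realType) (d : nat) (A U : 'M[R[i]]_d) (lam : 'I_d -> R)
    (rho sqrtrho : R -> 'M[R[i]]_d) (T : R) :
  q_hermitian A ->
  q_unitary U ->
  (forall k : 'I_d, A *m col k U = (Complex (lam k) 0) *: col k U) ->
  (forall t, q_density (rho t)) ->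
  (forall t, q_sqrt (sqrtrho t) (rho t)) ->
  (forall t, t \in `[0, T] -> mderivable sqrtrho t) ->
  0 < T ->
  let f := fun t => Num.sqrt (\sum_(k < d) hs2 (commut (mderiv sqrtrho t) (kbproj U k))) in
  lebesgue_measure.-integrable `[0, T]%classic (fun t => (f t)%:E) ->
  time_avg f T != 0 ->
  T >= Num.sqrt 2 * `| Num.sqrt (coherence (sqrtrho 0) U)
                       - Num.sqrt (coherence (sqrtrho T) U) | / time_avg f T.
Proof.
move=> _ _ _ _ _ hder T0 f intf avg0.
pose S := sqrtrho.
pose V (X : 'M[R[i]]_d) : 'I_d -> 'M[R[i]]_d := fun k => commut X (kbproj U k).
pose v t := flat (V (S t)).
pose v' t := flat (V (mderiv S t)).
have fE t : f t = nrm (v' t).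
  by rewrite /f /nrm -flat_sum.
have cohE t : Num.sqrt 2 * Num.sqrt (coherence (S t) U) = nrm (v t).
  rewrite /nrm -flat_sum -sqrtrM ?ler0n //.
  congr Num.sqrt; rewrite /coherence /skew_info -mulr_sumr mulrA mulfV ?mul1r //.
pose w x := v T x - v 0 x.
pose c := nrm w.
pose Rint := Rintegral lebesgue_measure `[0, T]%classic f.
have f0 t : 0 <= f t by rewrite /f sqrtr_ge0.
have Rint0 : 0 <= Rint by apply: Rintegral_ge0 => x _; exact: f0.
have key : c <= Rint.
  have [cz|cnz] := eqVneq c 0; first by rewrite cz.
  have cp : 0 < c by rewrite lt_neqAle eq_sym cnz nrm_ge0.
  pose u x := w x / c.
  pose L (X : 'M[R[i]]_d) := \sum_x u x * flat (V X) x.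
  have LD X Y : L (X + Y) = L X + L Y.
    rewrite /L -big_split /=; apply: eq_bigr => x _; rewrite -mulrDr; congr (_ * _).
    rewrite /flat /V /commut.
    rewrite mulmxDl mulmxDr opprD addrACA mxE.
    by case: x.2; rewrite ?ReD ?ImD.
  have LZ (r : R) X : L (r%:C *: X) = r * L X.
    rewrite /L mulr_sumr; apply: eq_bigr => x _; rewrite mulrCA; congr (_ * _).
    rewrite /flat /V /commut -scalemxAl -scalemxAr -scalerBr mxE.
    by case: x.2; rewrite ?ReZ ?ImZ.
  pose phi t := L (S t).
  pose phi' t := L (mderiv S t).
  have dphi t : 0 <= t <= T -> is_derive t (1 : R) phi (phi' t).
    move=> ht; apply: (lin_deriv LD LZ); apply: hder.
    by rewrite in_itv /=.
  have cphi t : 0 <= t <= T -> {for t, continuous phi}.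
    move=> ht; have [ex _] := dphi t ht.
    by apply: differentiable_continuous; apply/derivable1_diffP.
  have fle t : phi' t <= f t.
    rewrite fE /phi' /L /u.
    have -> : \sum_x w x / c * flat (V (mderiv S t)) x = c^-1 * \sum_x w x * v' t x.
      by rewrite mulr_sumr; apply: eq_bigr => x _; rewrite [w x * _]mulrC -mulrA.
    apply: (le_trans (ler_wpM2l _ (cs w (v' t)))); first by rewrite invr_ge0 ltW.
    by rewrite mulKf ?lt0r_neq0.
  have phiTE : phi T - phi 0 = c.
    rewrite /phi /L -sumrB.
    have -> : \sum_x (u x * flat (V (S T)) x - u x * flat (V (S 0)) x) = c^-1 * \sum_x w x ^+ 2.
      rewrite mulr_sumr; apply: eq_bigr => x _; rewrite -mulrBr /u.
      by rewrite [w x * _]mulrC -mulrA.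
    by rewrite -nrm_sqr -/c expr2 mulKf ?lt0r_neq0.
  have H := @coreR R 0 T phi phi' f T0 cphi (fun t ht => dphi t ltac:(by case/andP: ht => -> /ltW ->))
    (fun t _ => f0 t) (fun t _ => fle t) intf.
  by rewrite phiTE in H.
have avgE : time_avg f T = T^-1 * Rint by [].
have avgpos : 0 < time_avg f T.
  by rewrite lt_neqAle eq_sym avg0 avgE mulr_ge0 // invr_ge0 ltW.
rewrite ler_pdivrMr // avgE mulrA mulfV ?lt0r_neq0 // mul1r.
apply: le_trans key.
have c0 := cohE 0; have cT := cohE T; rewrite /S in c0 cT.
have E : Num.sqrt 2 * `|Num.sqrt (coherence (sqrtrho 0) U) - Num.sqrt (coherence (sqrtrho T) U)|
   = `|nrm (v T) - nrm (v 0)|.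
  by rewrite -c0 -cT -mulrBr normrM (ger0_norm (sqrtr_ge0 2)) distrC.
rewrite E; exact: (nrm_diff (v T) (v 0)).
Qed.
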